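(* For every $n\ge1$, $q(n;\mathit{trees})<\log^*n+5$; that is, there exists a tree $T$ with $n$ vertices such that $D(T)<\log^* n+5$.
   Context: The tower function is $T(0)=1$, $T(i)=2^{T(i-1)}$; $\log^* n=\min\{i: T(i)\ge n\}$. Graphs are simple undirected graphs viewed as structures for the first-order language with adjacency symbol $\sim$ and equality. A sentence defines a finite graph $G$ if it is true on $G$ and false on every graph (of any cardinality) not isomorphic to $G$; $D(G)$ is the minimum quantifier rank (maximum number of nested quantifiers) of a sentence defining $G$. $q(n;\mathit{trees})=\min\{D(T): T \text{ a tree with } n\text{ vertices}\}$. *)

(* Defs.v *)
From mathcomp Require Import all_boot.
Set Implicit Arguments. Unset Strict Implicit. Unset Printing Implicit Defensive.

Fixpoint tower (i : nat) : nat := if i is i'.+1 then 2 ^ tower i' else 1.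

Lemma tower_ge (i : nat) : i <= tower i.
Proof. elim: i => [//|i IH] /=; exact: leq_ltn_trans IH (ltn_expl _ (ltnSn 1)). Qed.

Lemma logstar_ex (n : nat) : exists i, n <= tower i.
Proof. by exists n; apply: tower_ge. Qed.

Definition logstar (n : nat) : nat := ex_minn (logstar_ex n).

(** First-order formulas, de Bruijn variables (index 0 = innermost binder). *)
Inductive form : Type :=
  | FAdj : nat -> nat -> form
  | FEq  : nat -> nat -> form
  | FTrue : form
  | FFalse : form
  | FNot : form -> form
  | FAnd : form -> form -> form
  | FOr  : form -> form -> form
  | FImp : form -> form -> form
  | FEx  : form -> form
  | FAll : form -> form.

Fixpoint qr (f : form) : nat :=
  match f with
  | FAdj _ _ | FEq _ _ | FTrue | FFalse => 0
  | FNot g => qr g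
  | FAnd g h | FOr g h | FImp g h => maxn (qr g) (qr h)
  | FEx g | FAll g => (qr g).+1
  end.

Fixpoint bounded (k : nat) (f : form) : bool :=
  match f with
  | FAdj i j | FEq i j => (i < k) && (j < k)
  | FTrue | FFalse => true
  | FNot g => bounded k g
  | FAnd g h | FOr g h | FImp g h => bounded k g && bounded k h
  | FEx g | FAll g => bounded k.+1 g
  end.

Definition sentence (f : form) : bool := bounded 0 f.

Fixpoint sat (V : Type) (R : V -> V -> Prop) (env : seq V) (f : form) : Prop :=
  match f with
  | FAdj i j => match onth env i, onth env j with
                | Some a, Some b => R a b | _, _ => False end
  | FEq i j => match onth env i, onth env j with
                | Some a, Some b => a = b | _, _ => False end
  | FTrue => True
  | FFalse => False
  | FNot g => ~ sat R env g
  | FAnd g h => sat R env g /\ sat R env h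
  | FOr g h => sat R env g \/ sat R env h
  | FImp g h => sat R env g -> sat R env h
  | FEx g => exists x : V, sat R (x :: env) g
  | FAll g => forall x : V, sat R (x :: env) g
  end.

Definition is_graph (V : Type) (R : V -> V -> Prop) : Prop :=
  (forall x y, R x y -> R y x) /\ (forall x, ~ R x x).

Definition iso (n : nat) (e : rel 'I_n) (V : Type) (R : V -> V -> Prop) : Prop :=
  exists f : 'I_n -> V,
    injective f /\ (forall y : V, exists x, f x = y) /\
    (forall x y, e x y <-> R (f x) (f y)).

Definition defines (n : nat) (e : rel 'I_n) (phi : form) : Prop :=
  sentence phi /\
  sat (fun x y : 'I_n => e x y) [::] phi /\
  (forall (V : Type) (R : V -> V -> Prop),
      is_graph R -> sat R [::] phi -> iso e R).

(** D(G) < k  <->  some sentence of quantifier rank < k defines G *)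
Definition D_lt (n : nat) (e : rel 'I_n) (k : nat) : Prop :=
  exists phi, defines e phi /\ qr phi < k.

Definition is_tree (n : nat) (e : rel 'I_n) : Prop :=
  symmetric e /\ irreflexive e /\
  (forall x y : 'I_n, connect e x y) /\
  ~ (exists s : seq 'I_n, [&& uniq s, 3 <= size s & cycle e s]).

(* Main.v *)
From Stdlib Require Import ClassicalEpsilon Classical.
Require Import Defs.
From mathcomp Require Import all_boot zify.
Set Implicit Arguments. Unset Strict Implicit. Unset Printing Implicit Defensive.

Definition bitb (m i : nat) : bool := odd (m %/ 2 ^ i).
Definition bits (m : nat) : seq nat := [seq i <- iota 0 m | bitb m i].

Lemma bitb_le m i : bitb m i -> 2 ^ i <= m.
Proof.
rewrite /bitb; case: (leqP (2 ^ i) m) => // h.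
by rewrite divn_small.
Qed.

Lemma bitb_lt m i : bitb m i -> i < m.
Proof. move/bitb_le => h; exact: leq_trans (ltn_expl _ (ltnSn 1)) h. Qed.

Lemma mem_bits m i : (i \in bits m) = bitb m i.
Proof.
rewrite /bits mem_filter mem_iota /=.
case h: (bitb m i) => //=; by rewrite (bitb_lt h).
Qed.

Lemma uniq_bits m : uniq (bits m).
Proof. by rewrite /bits filter_uniq // iota_uniq. Qed.

Lemma bits0 : bits 0 = [::].
Proof. by []. Qed.

Lemma modn2step m P : 0 < P -> m %% (P * 2) = m %% P + odd (m %/ P) * P.
Proof.
move=> P0.
have h1 := divn_eq m P.
set q := m %/ P in h1 *.
set r := m %% P in h1 *.
have hr : r < P by rewrite ltn_mod.
have hq := odd_double_half q.
rewrite -muln2 in hq.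
have -> : m = (q./2) * (P * 2) + (odd q * P + r).
  rewrite h1 -{1}hq. rewrite mulnDl. lia.
rewrite modnMDl modn_small; first lia.
case: (odd q); lia.
Qed.

Lemma expand m B : m %% 2 ^ B = \sum_(i < B) bitb m i * 2 ^ i.
Proof.
elim: B => [|B IH]; first by rewrite big_ord0 expn0 modn1.
rewrite big_ord_recr /= -IH expnSr modn2step ?expn_gt0 //.
Qed.

Lemma expand_full m : m = \sum_(i < m) bitb m i * 2 ^ i.
Proof. by rewrite -expand modn_small // ltn_expl. Qed.

Lemma bitb_inj a b : (forall i, bitb a i = bitb b i) -> a = b.
Proof.
move=> h.
have ha : a < 2 ^ (a + b).
  apply: (leq_trans (ltn_expl _ (ltnSn 1))); by rewrite leq_exp2l // leq_addr.
have hb : b < 2 ^ (a + b).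
  apply: (leq_trans (ltn_expl _ (ltnSn 1))); by rewrite leq_exp2l // leq_addl.
apply: (etrans (esym (modn_small ha))); apply: (etrans _ (modn_small hb)).
rewrite !expand; apply: eq_bigr => i _; by rewrite h.
Qed.

Lemma sum_sub_bits (A : seq nat) j : uniq A -> (forall a, a \in A -> bitb j a) ->
  \sum_(a <- A) 2 ^ a <= j.
Proof.
move=> uA hA.
have pA : perm_eq A [seq i <- iota 0 j | i \in A].
  apply: uniq_perm => //; first by rewrite filter_uniq // iota_uniq.
  move=> x; rewrite mem_filter mem_iota /=.
  case hx: (x \in A) => //=; by rewrite (bitb_lt (hA x hx)).
rewrite (perm_big _ pA) /= big_filter.
apply: (@leq_trans (\sum_(i <- iota 0 j) bitb j i * 2 ^ i)).
  rewrite big_mkcond /=; apply: leq_sum => i _. case hi: (i \in A) => //. by rewrite (hA i hi) mul1n.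
have -> : \sum_(i <- iota 0 j) bitb j i * 2 ^ i = \sum_(i < j) bitb j i * 2 ^ i.
  by rewrite (_ : iota 0 j = index_iota 0 j) ?big_mkord // /index_iota subn0.
by rewrite -expand_full.
Qed.


Lemma bitb_tower m i L : m < 2 ^ L -> bitb m i -> i < L.
Proof.
move=> hm /bitb_le h.
have : 2 ^ i < 2 ^ L by exact: leq_ltn_trans h hm.
by rewrite ltn_exp2l.
Qed.

Definition bigOr (l : seq form) : form := foldr FOr FFalse l.
Definition bigAnd (l : seq form) : form := foldr FAnd FTrue l.

Fixpoint psiL (k : nat) (ts : seq nat) (x p : nat) : form :=
  match k with
  | 0 => FFalse
  | k'.+1 =>
    FAnd (FAll (FImp (FAdj 0 x.+1)
                 (FOr (FEq 0 p.+1) (bigOr [seq psiL k' (bits i) 0 x.+1 | i <- ts]))))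
         (bigAnd [seq FEx (FAnd (FAdj 0 x.+1) (FAnd (FNot (FEq 0 p.+1))
                                                     (psiL k' (bits i) 0 x.+1))) | i <- ts])
  end.

Fixpoint Psem (V : Type) (R : V -> V -> Prop) (k : nat) (ts : seq nat) (x p : V) : Prop :=
  match k with
  | 0 => False
  | k'.+1 =>
    (forall y, R y x -> y = p \/ exists2 i, i \in ts & Psem R k' (bits i) y x) /\
    (forall i, i \in ts -> exists y, [/\ R y x, y <> p & Psem R k' (bits i) y x])
  end.

Section Sem.
Variables (V : Type) (R : V -> V -> Prop).

Lemma sat_bigOr env (F : nat -> form) (l : seq nat) :
  sat R env (bigOr [seq F i | i <- l]) <-> exists2 i, i \in l & sat R env (F i).
Proof.
elim: l => [|a l IH] /=; first by split => // -[].
rewrite IH; split.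
  case=> [h|[i hi h]]; first by exists a; rewrite ?inE ?eqxx.
  by exists i; rewrite // inE hi orbT.
move=> [i]; rewrite inE => /orP [/eqP -> h|hi h]; [by left | right; by exists i].
Qed.

Lemma sat_bigAnd env (F : nat -> form) (l : seq nat) :
  sat R env (bigAnd [seq F i | i <- l]) <-> forall i, i \in l -> sat R env (F i).
Proof.
elim: l => [|a l IH] /=; first by split.
rewrite IH; split.
  move=> [h1 h2] i; rewrite inE => /orP [/eqP -> //|]; exact: h2.
move=> h; split; first by apply: h; rewrite inE eqxx.
by move=> i hi; apply: h; rewrite inE hi orbT.
Qed.

Lemma sat_psiL k : forall ts env x p a b, onth env x = Some a -> onth env p = Some b ->
  (sat R env (psiL k ts x p) <-> Psem R k ts a b).
Proof.
elim: k => [|k IH] ts env x p a b hx hp /=; first by [].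
split.
- move=> [h1 h2]; split.
  + move=> y hy; have := h1 y; rewrite /= hx hp.
    move=> /(_ hy) [->|]; first by left.
    move/sat_bigOr => [i hi]. rewrite (IH (bits i) (y :: env) 0 x.+1 y a) //.
    by right; exists i.
  + move=> i hi; move/sat_bigAnd: h2 => /(_ i hi) /= [y].
    rewrite hx hp (IH (bits i) (y :: env) 0 x.+1 y a) //.
    by move=> [h3 [h4 h5]]; exists y; split.
- move=> [h1 h2]; split.
  + move=> y /=; rewrite hx hp => hy.
    case: (h1 y hy) => [->|[i hi h]]; first by left.
    right; apply/sat_bigOr; exists i => //.
    by rewrite (IH (bits i) (y :: env) 0 x.+1 y a).
  + apply/sat_bigAnd => i hi /=.
    have [y [h3 h4 h5]] := h2 i hi.
    exists y; rewrite hx hp (IH (bits i) (y :: env) 0 x.+1 y a) //.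
Qed.

End Sem.

Lemma qr_bigOr (F : nat -> form) (l : seq nat) Q :
  (forall i, i \in l -> qr (F i) <= Q) -> qr (bigOr [seq F i | i <- l]) <= Q.
Proof.
elim: l => [|a l IH] h //=.
rewrite geq_max h ?inE ?eqxx // IH // => i hi; apply: h; by rewrite inE hi orbT.
Qed.

Lemma qr_bigAnd (F : nat -> form) (l : seq nat) Q :
  (forall i, i \in l -> qr (F i) <= Q) -> qr (bigAnd [seq F i | i <- l]) <= Q.
Proof.
elim: l => [|a l IH] h //=.
rewrite geq_max h ?inE ?eqxx // IH // => i hi; apply: h; by rewrite inE hi orbT.
Qed.

Lemma qr_psiL_step k ts x p Q :
  (forall i, i \in ts -> qr (psiL k (bits i) 0 x.+1) <= Q) -> qr (psiL k.+1 ts x p) <= Q.+1.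
Proof.
move=> h /=.
rewrite geq_max !max0n ltnS (qr_bigOr h) /=.
apply: qr_bigAnd => i hi /=; rewrite !max0n ltnS; exact: h.
Qed.

Lemma qr_psi_tower L : forall k m x p, m < tower L -> qr (psiL k (bits m) x p) <= L.+1.
Proof.
elim: L => [|L IH] [|k] m x p hm //=.
- apply: qr_psiL_step => i; move: hm; rewrite ltnS leqn0 => /eqP ->. by [].
- apply: qr_psiL_step => i; rewrite mem_bits => hi.
  apply: IH; exact: bitb_tower hm hi.
Qed.

Lemma bounded_bigOr (F : nat -> form) (l : seq nat) d :
  (forall i, i \in l -> bounded d (F i)) -> bounded d (bigOr [seq F i | i <- l]).
Proof.
elim: l => [|a l IH] h //=.
rewrite h ?inE ?eqxx // IH // => i hi; apply: h; by rewrite inE hi orbT.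
Qed.

Lemma bounded_bigAnd (F : nat -> form) (l : seq nat) d :
  (forall i, i \in l -> bounded d (F i)) -> bounded d (bigAnd [seq F i | i <- l]).
Proof.
elim: l => [|a l IH] h //=.
rewrite h ?inE ?eqxx // IH // => i hi; apply: h; by rewrite inE hi orbT.
Qed.

Lemma bounded_psiL k : forall ts x p d, x < d -> p < d -> bounded d (psiL k ts x p).
Proof.
elim: k => [|k IH] ts x p d hx hp //=.
rewrite !ltnS hx hp /= bounded_bigOr /=; last first.
  by move=> i _; apply: IH.
apply: bounded_bigAnd => i _ /=; rewrite !ltnS hx hp /=; exact: IH.
Qed.

Definition psiN N i x p := psiL N (bits i) x p.

Definition Phi1 (S : seq nat) (N : nat) : form :=
  FEx (FAnd (psiL N.+1 S 0 0)
            (FAll (FOr (FEq 0 1)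
                       (FEx (FAnd (FAdj 1 0) (bigOr [seq psiN N i 1 0 | i <- iota 0 N])))))).

Definition Theta (N : nat) : form :=
  FAll (FAll (FAll (FImp (FAnd (FAdj 1 2) (FAnd (FAdj 0 2) (FNot (FEq 1 0))))
     (FNot (bigOr [seq FAnd (psiN N i 1 2) (psiN N i 0 2) | i <- iota 0 N]))))).

Definition Xi (N : nat) : form :=
  FAll (FAll (FImp (FAdj 1 0)
     (FNot (FAnd (bigOr [seq psiN N i 1 0 | i <- iota 0 N])
                 (bigOr [seq psiN N i 0 1 | i <- iota 0 N]))))).

Definition Phi S N := FAnd (Phi1 S N) (FAnd (Theta N) (Xi N)).

Lemma sentence_Phi S N : sentence (Phi S N).
Proof.
rewrite /sentence /Phi /Phi1 /Theta /Xi /psiN /=.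
repeat (apply/andP; split);
  try (apply: bounded_bigOr => i _ /=); try (apply: bounded_bigAnd => i _ /=);
  rewrite ?bounded_psiL //.
Qed.

Arguments psiL : simpl never.

Lemma qr_Phi S N L : N <= tower L -> (forall i, i \in S -> i < N) -> qr (Phi S N) <= L + 4.
Proof.
move=> hN hS.
have hpsi : forall i x p, i < N -> qr (psiN N i x p) <= L.+1.
  move=> i x p hi; apply: qr_psi_tower; exact: leq_trans hi hN.
rewrite /Phi /Phi1 /Theta /Xi /=.
have h1 : qr (psiL N.+1 S 0 0) <= L.+2.
  by apply: qr_psiL_step => i hi; apply: hpsi; exact: hS.
rewrite !geq_max.
apply/andP; split.
  rewrite addn4 ltnS geq_max; apply/andP; split; first exact: leq_trans h1 _.
  rewrite !max0n !ltnS; apply: qr_bigOr => i; rewrite mem_iota add0n => /andP [_ hi]; exact: hpsi.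
rewrite !max0n; apply/andP; split.
  rewrite addn4 !ltnS; apply: qr_bigOr => i; rewrite mem_iota add0n => /andP [_ hi] /=.
  by rewrite geq_max !hpsi.
rewrite addn4 !ltnS geq_max; apply/andP; split; apply: leq_trans (_ : _ <= L.+1) _ => //;
  apply: qr_bigOr => i; rewrite mem_iota add0n => /andP [_ hi]; exact: hpsi.
Qed.

Definition PhiSem (V : Type) (R : V -> V -> Prop) (S : seq nat) (N : nat) : Prop :=
  [/\ (exists r, Psem R N.+1 S r r /\
         forall z, z = r \/ exists w, R z w /\ exists2 i, i < N & Psem R N (bits i) z w),
      (forall x y z, R y x -> R z x -> y <> z -> forall i, i < N ->
          Psem R N (bits i) y x -> Psem R N (bits i) z x -> False) &
      (forall z w, R z w -> forall i j, i < N -> j < N ->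
          Psem R N (bits i) z w -> Psem R N (bits j) w z -> False)].

Lemma sat_Phi V (R : V -> V -> Prop) S N : sat R [::] (Phi S N) <-> PhiSem R S N.
Proof.
have E : forall env i a b x p, onth env x = Some a -> onth env p = Some b ->
   (sat R env (psiN N i x p) <-> Psem R N (bits i) a b).
  by move=> env i a b x p hx hp; apply: sat_psiL.
have HR : forall r, sat R [:: r] (psiL N.+1 S 0 0) <-> Psem R N.+1 S r r.
  by move=> r; apply: sat_psiL.
rewrite /Phi /Phi1 /Theta /Xi; move: HR; generalize (psiL N.+1 S 0 0) => rho HR /=; split.
- move=> [[r [hr hz]] [hT hX]]; split.
  + exists r; split; first by rewrite -HR.
    move=> z; case: (hz z) => [->|[w [hw /sat_bigOr [i]]]]; first by left.
    rewrite mem_iota /= => hi; rewrite (E [:: w; z; r] i z w) // => h.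
    by right; exists w; split => //; exists i.
  + move=> x y z hy hz' hyz i hi h1 h2; apply: (hT x y z); first by split.
    apply/sat_bigOr; exists i; first by rewrite mem_iota.
    by rewrite /= (E [:: z; y; x] i y x) // (E [:: z; y; x] i z x).
  + move=> z w hzw i j hi hj h1 h2; apply: (hX z w hzw); split.
      apply/sat_bigOr; exists i; first by rewrite mem_iota.
      by rewrite (E [:: w; z] i z w).
    apply/sat_bigOr; exists j; first by rewrite mem_iota.
    by rewrite (E [:: w; z] j w z).
- move=> [[r [hr hz]] hT hX]; split.
  + exists r; split; first by rewrite HR.
    move=> z; case: (hz z) => [->|[w [hw [i hi h]]]]; first by left.
    right; exists w; split => //; apply/sat_bigOr; exists i; first by rewrite mem_iota.
    by rewrite (E [:: w; z; r] i z w).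
  split.
  + move=> x y z [hy [hz' hyz]] /sat_bigOr [i]; rewrite mem_iota /= => hi.
    rewrite (E [:: z; y; x] i y x) // (E [:: z; y; x] i z x) // => -[h1 h2].
    exact: (hT x y z hy hz' hyz i hi h1 h2).
  + move=> z w hzw [/sat_bigOr [i hi h1] /sat_bigOr [j hj h2]].
    move: hi hj; rewrite !mem_iota /= => hi hj.
    move: h1 h2; rewrite (E [:: w; z] i z w) // (E [:: w; z] j w z) // => h1 h2.
    exact: (hX z w hzw i j hi hj h1 h2).
Qed.

Section Generic.
Variables (V : Type) (R : V -> V -> Prop).

Lemma Psem_fuel k' : forall k ts x p, (forall i, i \in ts -> i < k') ->
  Psem R k ts x p -> Psem R k'.+1 ts x p.
Proof.
elim: k' => [|k' IH] [|k] ts x p hts //= [h1 h2].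
- split.
    move=> y hy; case: (h1 y hy) => [->|[i hi]]; first by left.
    by have := hts i hi.
  by move=> i /hts.
- split.
  + move=> y hy; case: (h1 y hy) => [->|[i hi h]]; first by left.
    right; exists i => //; apply: IH h => j; rewrite mem_bits => /bitb_lt hj.
    have := hts i hi; lia.
  + move=> i hi; have [y [hy1 hy2 hy3]] := h2 i hi; exists y; split => //.
    apply: IH hy3 => j; rewrite mem_bits => /bitb_lt hj.
    have := hts i hi; lia.
Qed.

Lemma Psem_norm N i k x p : i < N -> Psem R k (bits i) x p -> Psem R N (bits i) x p.
Proof.
case: N => // N hi; apply: Psem_fuel => j; rewrite mem_bits => /bitb_lt; lia.
Qed.

Lemma Psem_uniq k : forall k' a b x p, Psem R k (bits a) x p -> Psem R k' (bits b) x p -> a = b.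
Proof.
elim: k => [|k IH] [|k'] a b x p //= [ha1 ha2] [hb1 hb2].
apply: bitb_inj => i; apply/idP/idP; rewrite -!mem_bits => hi.
- have [y [hy1 hy2 hy3]] := ha2 i hi.
  case: (hb1 y hy1) => [//|[j hj h]].
  by rewrite (IH _ _ _ _ _ hy3 h).
- have [y [hy1 hy2 hy3]] := hb2 i hi.
  case: (ha1 y hy1) => [//|[j hj h]].
  by rewrite -(IH _ _ _ _ _ h hy3).
Qed.

End Generic.

Fixpoint vr (T : seq nat) (a : seq nat) : bool :=
  match a with
  | [::] => true
  | j :: a' => vr T a' && (if a' is i :: _ then bitb i j else j \in T)
  end.

Fixpoint allT (k i : nat) (a : seq nat) : seq (seq nat) :=
  match k with
  | 0 => [::]
  | k'.+1 => a :: flatten [seq allT k' j (j :: a) | j <- bits i]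
  end.

Fixpoint sz (k i : nat) : nat :=
  match k with
  | 0 => 0
  | k'.+1 => (sumn [seq sz k' j | j <- bits i]).+1
  end.

Definition sizeT (i : nat) : nat := sz i.+1 i.

Definition verts (S : seq nat) (F : nat) : seq (seq nat) :=
  [::] :: flatten [seq allT F j [:: j] | j <- S].

Lemma vr_cat T c i a : vr T (c ++ i :: a) = vr (bits i) c && vr T (i :: a).
Proof.
elim: c => [|j c IH]; first by [].
rewrite cat_cons [vr T (j :: _)]/= [vr (bits i) (j :: c)]/= IH.
set v := vr T (i :: a).
case: c {IH} => [|j' c] /=; rewrite ?mem_bits;
  repeat match goal with
  | |- context[vr ?t ?l] => case: (vr t l)
  | |- context[bitb ?x ?y] => case: (bitb x y)
  | |- context[v] => case: v
  end; rewrite ?andbT ?andbF ?andTb ?andFb; done.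
Qed.

Lemma suffix_allT k : forall i a b, b \in allT k i a -> exists c, b = c ++ a.
Proof.
elim: k => [|k IH] i a b //=; rewrite inE => /orP [/eqP ->|]; first by exists [::].
move/flatten_mapP => [j _ /IH [c ->]]; exists (rcons c j); by rewrite cat_rcons.
Qed.

Lemma mem_allT k : forall i a b, i < k ->
  (b \in allT k i a <-> exists c, b = c ++ a /\ vr (bits i) c).
Proof.
elim: k => [|k IH] i a b // hik /=; rewrite inE; split.
- move=> /orP [/eqP ->|]; first by exists [::].
  move/flatten_mapP => [j hj]; rewrite IH; last first.
    move: hj; rewrite mem_bits => /bitb_lt; lia.
  move=> [c [-> hc]]; exists (rcons c j); rewrite cat_rcons; split => //.
  by rewrite -cats1 (vr_cat _ _ j [::]) hc /= hj.
- move=> [c [-> hc]]; case/lastP: c hc => [|c j] hc; first by rewrite eqxx.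
  apply/orP; right; apply/flatten_mapP.
  move: hc; rewrite -cats1 (vr_cat _ _ j [::]) /= => /andP [hc hj].
  exists j => //; rewrite IH; last by move: hj; rewrite mem_bits => /bitb_lt; lia.
  by exists c; rewrite -catA.
Qed.

Lemma size_allT k : forall i a, size (allT k i a) = sz k i.
Proof.
elim: k => [|k IH] i a //=; rewrite size_flatten /shape -map_comp.
congr (_.+1); congr sumn; apply: eq_map => j /=; exact: IH.
Qed.

Lemma sz_fuel k : forall k' i, i < k -> i < k' -> sz k i = sz k' i.
Proof.
elim: k => [|k IH] [|k'] i // hk hk' /=.
congr (_.+1); congr sumn; apply/eq_in_map => j; rewrite mem_bits => /bitb_lt hj.
apply: IH; lia.
Qed.

Lemma uniq_flatten_map (A : eqType) (l : seq nat) (G : nat -> seq A) :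
  uniq l -> (forall j, j \in l -> uniq (G j)) ->
  (forall j j' b, j \in l -> j' \in l -> j != j' -> b \in G j -> b \in G j' -> False) ->
  uniq (flatten [seq G j | j <- l]).
Proof.
elim: l => [|a l IH] //= /andP [al ul] hu hd.
rewrite cat_uniq hu ?inE ?eqxx //= IH //; last first.
  - by move=> j j' b hj hj'; apply: hd; rewrite inE ?hj ?hj' orbT.
  - by move=> j hj; apply: hu; rewrite inE hj orbT.
rewrite andbT; apply/hasP => -[b /flatten_mapP [j hj hbj] hba].
apply: (hd a j b) => //; rewrite ?inE ?eqxx ?hj ?orbT //.
by apply/eqP => eaj; move: al; rewrite eaj hj.
Qed.

Lemma cons_suffix_inj (c c' a : seq nat) j j' : c ++ j :: a = c' ++ j' :: a -> j = j'.
Proof.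
move=> h.
have hs : size c = size c' by move/(congr1 size): h; rewrite !size_cat /=; lia.
by move/eqP: h; rewrite eqseq_cat // => /andP [_ /eqP [->]].
Qed.

Lemma uniq_allT k : forall i a, uniq (allT k i a).
Proof.
elim: k => [|k IH] i a //=.
apply/andP; split.
  apply/negP => /flatten_mapP [j _ /suffix_allT [c]].
  move/(congr1 size); rewrite size_cat /=; lia.
apply: uniq_flatten_map; first exact: uniq_bits.
  by move=> j _; exact: IH.
move=> j j' b _ _ hjj' /suffix_allT [c ->] /suffix_allT [c' hc].
by move: hjj'; rewrite (cons_suffix_inj hc) eqxx.
Qed.

Section Verts.
Variables (S : seq nat) (F : nat).
Hypothesis hSF : forall j, j \in S -> j < F.
Hypothesis uS : uniq S.

Lemma mem_verts b : b \in verts S F <-> vr S b.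
Proof.
rewrite /verts inE; split.
- move=> /orP [/eqP -> //|/flatten_mapP [j hj]].
  rewrite mem_allT ?hSF // => -[c [-> hc]].
  by rewrite vr_cat hc /= hj.
- case/lastP: b => [|c j]; first by rewrite eqxx.
  rewrite -cats1 vr_cat /= => /andP [hc hj].
  apply/orP; right; apply/flatten_mapP; exists j => //.
  by rewrite mem_allT ?hSF //; exists c.
Qed.

Lemma uniq_verts : uniq (verts S F).
Proof.
rewrite /verts /=; apply/andP; split.
  apply/negP => /flatten_mapP [j _ /suffix_allT [c]].
  move/(congr1 size); rewrite size_cat /=; lia.
apply: uniq_flatten_map => //; first by move=> j _; exact: uniq_allT.
move=> j j' b _ _ hjj' /suffix_allT [c ->] /suffix_allT [c' hc].
by move: hjj'; rewrite (cons_suffix_inj hc) eqxx.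
Qed.

Lemma size_verts : size (verts S F) = (sumn [seq sizeT j | j <- S]).+1.
Proof.
rewrite /verts /= size_flatten /shape -map_comp; congr (_.+1); congr sumn.
apply/eq_in_map => j hj /=; rewrite size_allT /sizeT; apply: sz_fuel; last by [].
exact: hSF.
Qed.

End Verts.

Definition adjA (a b : seq nat) : bool :=
  ((b != [::]) && (behead b == a)) || ((a != [::]) && (behead a == b)).

Lemma adjA_sym a b : adjA a b = adjA b a.
Proof. by rewrite /adjA orbC. Qed.

Lemma adjA_irr a : adjA a a = false.
Proof.
rewrite /adjA orbb; case: a => //= x a; apply/eqP => h.
by move/(congr1 size): h => /=; lia.
Qed.

Lemma adjA_down a b : adjA a b -> size b <= size a -> b = behead a.
Proof.
rewrite /adjA => /orP [/andP [hb /eqP <-]|/andP [_ /eqP -> //]].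
by case: b hb => //= x b _; lia.
Qed.

Lemma vr_behead T b : vr T b -> vr T (behead b).
Proof. by case: b => //= j b /andP []. Qed.

Section Graph.
Variables (S : seq nat) (F n : nat).
Hypothesis hSF : forall j, j \in S -> j < F.
Hypothesis uS : uniq S.
Hypothesis hn : size (verts S F) = n.

Definition addr (u : 'I_n) : seq nat := nth [::] (verts S F) u.
Definition eG : rel 'I_n := fun u v => adjA (addr u) (addr v).

Lemma addr_vr u : vr S (addr u).
Proof. rewrite -(mem_verts hSF); apply: mem_nth; by rewrite hn. Qed.

Lemma addr_inj u v : addr u = addr v -> u = v.
Proof.
move/eqP; rewrite /addr nth_uniq ?hn //; first by move/eqP; apply: val_inj.
exact: uniq_verts.
Qed.

Lemma addr_surj b : vr S b -> exists u, addr u = b.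
Proof.
rewrite -(mem_verts hSF) => hb.
have hi : index b (verts S F) < n by rewrite -hn index_mem.
by exists (Ordinal hi); rewrite /addr /= nth_index.
Qed.

Lemma eG_sym : symmetric eG.
Proof. by move=> u v; rewrite /eG adjA_sym. Qed.

Lemma tree_eG : is_tree eG.
Proof.
have [u0 hu0] := @addr_surj [::] erefl.
have conn0 : forall k x, size (addr x) <= k -> connect eG x u0.
  elim=> [|k IH] x hx.
    have -> : x = u0 by apply: addr_inj; rewrite hu0; case: (addr x) hx.
    exact: connect0.
  case ex: (addr x) => [|j b].
    have -> : x = u0 by apply: addr_inj; rewrite hu0 ex.
    exact: connect0.
  have [y hy] := addr_surj (vr_behead (addr_vr x)).
  rewrite ex /= in hy.
  apply: connect_trans (connect1 _) (IH y _).
    by rewrite /eG hy ex /adjA /= eqxx orbT.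
  by rewrite hy; move: hx; rewrite ex /=.
split; first exact: eG_sym.
split; first by move=> u; rewrite /eG adjA_irr.
split.
  move=> x y; apply: connect_trans (conn0 _ x (leqnn _)) _.
  rewrite (sym_connect_sym eG_sym); exact: conn0.
move=> [s /and3P [us hs cs]].
case: s us hs cs => [|x0 s0] // us hs cs.
have [mm ms hmax] : exists2 m, m \in x0 :: s0 & forall u, u \in x0 :: s0 -> size (addr u) <= size (addr m).
  have h0 : x0 \in x0 :: s0 by rewrite inE eqxx.
  case: (@arg_maxnP _ x0 (mem (x0 :: s0)) (fun u => size (addr u)) h0).
  move=> i hi hmax; by exists i.
have [i s' hrot] := rot_to ms.
have cs' : cycle eG (mm :: s') by rewrite -hrot rot_cycle.
have us' : uniq (mm :: s') by rewrite -hrot rot_uniq.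
have hs' : 3 <= size (mm :: s') by rewrite -hrot size_rot.
have mem' : forall u, u \in mm :: s' -> u \in x0 :: s0 by move=> u; rewrite -hrot mem_rot.
clear hrot; case: s' cs' us' hs' mem' => [|b [|c s3]] // cs' us' _ mem'.
move: cs'; rewrite /= rcons_path => /and4P [hmb _ _ hlm].
have hb : addr b = behead (addr mm).
  apply: adjA_down hmb _; apply: hmax; apply: mem'; by rewrite !inE eqxx orbT.
have hl : addr (last c s3) = behead (addr mm).
  apply: adjA_down _ _; first by rewrite adjA_sym.
  apply: hmax; apply: mem'; rewrite /= inE; apply/orP; right.
  by rewrite inE mem_last orbT.
have eb : b = last c s3 by apply: addr_inj; rewrite hb hl.
move: us'; rewrite /= => /and3P [_ /negP hbn _].
by apply: hbn; rewrite eb mem_last.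
Qed.

End Graph.

Lemma vr_lt T N a : (forall j, j \in T -> j < N) -> vr T a -> forall j, j \in a -> j < N.
Proof.
move=> hT; elim: a => [|j a IH] //= /andP [ha hj] x; rewrite inE => /orP [/eqP ->|]; last exact: IH.
case: a IH ha hj => [|i a] IH ha hj; first exact: hT.
have := IH ha i; rewrite inE eqxx => /(_ isT); move: hj => /bitb_lt; lia.
Qed.

Section Finite.
Variables (S : seq nat) (N n : nat).
Hypothesis hSN : forall j, j \in S -> j < N.
Hypothesis uS : uniq S.
Hypothesis hn : size (verts S N) = n.
Hypothesis hC : forall j, j \in S -> N <= \sum_(a <- S | a != j) 2 ^ a.

Local Notation ad := (@addr S N n).
Local Notation R := (fun x y : 'I_n => eG S N x y).

Lemma ad_lt u j : j \in ad u -> j < N.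
Proof. exact: vr_lt hSN (addr_vr hSN hn u) j. Qed.

Lemma Fchild k : forall u p j, ad u = j :: ad p -> j < k -> Psem R k (bits j) u p.
Proof.
elim: k => [|k IH] u p j hu hj //=; split.
- move=> y; rewrite /eG /adjA hu /= => /orP [/eqP h|/andP [hy /eqP h]].
    by left; apply: (addr_inj uS hn); rewrite h.
  right; case ey: (ad y) hy h => [|j' b] // _ /= hb.
  have := addr_vr hSN hn y; rewrite ey hb /= => /andP [_ hjj'].
  exists j'; first by rewrite mem_bits.
  apply: IH; first by rewrite ey hb hu.
  move: hjj' => /bitb_lt; lia.
- move=> j'; rewrite mem_bits => hjj'.
  have hv : vr S (j' :: ad u) by rewrite /= (addr_vr hSN hn u) hu.
  have [y hy] := addr_surj hSN hn hv.
  exists y; split.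
  + by rewrite /eG /adjA hy /= eqxx orbT.
  + move=> eyp; move: hy; rewrite eyp hu => /(congr1 size) /=; lia.
  + apply: IH => //; move: hjj' => /bitb_lt; lia.
Qed.

Lemma Froot k u0 : ad u0 = [::] -> N < k -> Psem R k S u0 u0.
Proof.
case: k => [//|k] hu0 hk /=; split.
- move=> y hy0; have : adjA (ad y) (ad u0) := hy0.
  rewrite /adjA hu0 /= => /andP [hy /eqP h].
  right; case ey: (ad y) hy h => [|j b] // _ /= hb; subst b.
  have := addr_vr hSN hn y; rewrite ey /= => hj.
  exists j => //; apply: Fchild; first by rewrite ey hu0.
  have := hSN hj; lia.
- move=> j hj.
  have hv : vr S [:: j] by rewrite /= hj.
  have [y hy] := addr_surj hSN hn hv.
  exists y; split.
  + by rewrite /eG /adjA hy hu0 /= eqxx.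
  + by move=> e; move: hy; rewrite e hu0.
  + apply: Fchild; first by rewrite hy hu0.
    have := hSN hj; lia.
Qed.

Lemma Fup m : forall p u j k t, size (ad p) <= m -> ad u = j :: ad p -> t < N ->
  Psem R k (bits t) p u -> False.
Proof.
elim: m => [|m IH] p u j [|k] t hm hu ht //= [h1 h2].
- have hp : ad p = [::] by case: (ad p) hm.
  rewrite hp in hu.
  have hjS : j \in S by have := addr_vr hSN hn u; rewrite hu /=.
  have hsub : forall a, a \in [seq a <- S | a != j] -> bitb t a.
    move=> a; rewrite mem_filter => /andP [haj haS].
    have hv : vr S [:: a] by rewrite /= haS.
    have [c hc] := addr_surj hSN hn hv.
    have hcp : eG S N c p by rewrite /eG /adjA hc hp /= eqxx.
    case: (h1 c hcp) => [ecu|[t2 ht2 hc2]].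
      by move: hc; rewrite ecu hu => -[] ea; move: haj; rewrite ea eqxx.
    have hc3 : Psem R N (bits a) c p by apply: Fchild; rewrite ?hc ?hp //; exact: hSN.
    by rewrite -mem_bits -(Psem_uniq hc2 hc3).
  have := sum_sub_bits (filter_uniq _ uS) hsub.
  rewrite big_filter; have := hC hjS; lia.
- case ep: (ad p) hm hu => [|j0 b] hm hu.
  +
    have hjS : j \in S by have := addr_vr hSN hn u; rewrite hu /=.
    have hsub : forall a, a \in [seq a <- S | a != j] -> bitb t a.
      move=> a; rewrite mem_filter => /andP [haj haS].
      have hv : vr S [:: a] by rewrite /= haS.
      have [c hc] := addr_surj hSN hn hv.
      have hcp : eG S N c p by rewrite /eG /adjA hc ep /= eqxx.
      case: (h1 c hcp) => [ecu|[t2 ht2 hc2]].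
        by move: hc; rewrite ecu hu => -[] ea; move: haj; rewrite ea eqxx.
      have hc3 : Psem R N (bits a) c p by apply: Fchild; rewrite ?hc ?ep //; exact: hSN.
      by rewrite -mem_bits -(Psem_uniq hc2 hc3).
    have := sum_sub_bits (filter_uniq _ uS) hsub.
    rewrite big_filter; have := hC hjS; lia.
  + have hvb : vr S b by have := addr_vr hSN hn p; rewrite ep => /vr_behead.
    have [pp hpp] := addr_surj hSN hn hvb.
    have hpp_p : eG S N pp p by rewrite /eG /adjA ep hpp /= eqxx.
    case: (h1 pp hpp_p) => [epu|[t2 ht2 hc2]].
      by move: hpp; rewrite epu hu => /(congr1 size) /=; lia.
    apply: (IH pp p j0 k t2) hc2.
    * by rewrite hpp; move: hm; rewrite /=.
    * by rewrite hpp ep.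
    * move: ht2; rewrite mem_bits => /bitb_lt; lia.
Qed.

Lemma Fup' p u k t : eG S N p u -> size (ad p) < size (ad u) -> t < N ->
  Psem R k (bits t) p u -> False.
Proof.
move=> hpu hs ht hP.
have hu : exists j, ad u = j :: ad p.
  move: hpu; rewrite /eG /adjA => /orP [/andP [hu /eqP h]|/andP [_ /eqP h]].
    by case: (ad u) hu h => // j b _ /= ->; exists j.
  by move: hs; rewrite -h; case: (ad p) => //= x l; lia.
case: hu => j hu; exact: (Fup (leqnn _) hu ht hP).
Qed.

Lemma Fsem : PhiSem R S N.
Proof.
have [u0 hu0] := addr_surj hSN hn (b:=[::]) erefl.
split.
- exists u0; split; first exact: Froot.
  move=> z; case ez: (ad z) => [|j b].
    by left; apply: (addr_inj uS hn); rewrite ez hu0.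
  have hvb : vr S b by have := addr_vr hSN hn z; rewrite ez => /vr_behead.
  have [w hw] := addr_surj hSN hn hvb.
  right; exists w; split; first by rewrite /= /eG /adjA ez hw /= eqxx orbT.
  have hj : j < N by apply: (ad_lt (u:=z)); rewrite ez inE eqxx.
  by exists j => //; apply: Fchild; rewrite ?ez ?hw.
- move=> x y z hy hz hyz t ht h1 h2.
  move: (hy) (hz); rewrite /eG /adjA.
  move=> /orP [/andP [hx /eqP ey]|/andP [hy0 /eqP ey]].
    move=> _; apply: (Fup' (p:=y) (u:=x) _ _ ht h1); first exact: hy.
    by rewrite -ey; case: (ad x) hx => //= a l _; lia.
  move=> /orP [/andP [hx /eqP ez]|/andP [hz0 /eqP ez]].
    apply: (Fup' (p:=z) (u:=x) _ _ ht h2); first exact: hz.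
    by rewrite -ez; case: (ad x) hx => //= a l _; lia.
  case eay: (ad y) hy0 ey => [|jy b1] // _ /= eb1.
  case eaz: (ad z) hz0 ez => [|jz b2] // _ /= eb2.
  have hjy : jy < N by apply: (ad_lt (u:=y)); rewrite eay inE eqxx.
  have hjz : jz < N by apply: (ad_lt (u:=z)); rewrite eaz inE eqxx.
  have c1 : Psem R N (bits jy) y x by apply: Fchild; rewrite ?eay ?eb1.
  have c2 : Psem R N (bits jz) z x by apply: Fchild; rewrite ?eaz ?eb2.
  have e1 := Psem_uniq h1 c1; have e2 := Psem_uniq h2 c2.
  apply: hyz; apply: (addr_inj uS hn); by rewrite eay eaz -e1 -e2 eb1 eb2.
- move=> z w hzw i j hi hj h1 h2.
  move: (hzw); rewrite /eG /adjA => /orP [/andP [hw /eqP e]|/andP [hz /eqP e]].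
    apply: (Fup' (p:=z) (u:=w) _ _ hi h1); first exact: hzw.
    by rewrite -e; case: (ad w) hw => //= a l _; lia.
  apply: (Fup' (p:=w) (u:=z) _ _ hj h2); first by rewrite eG_sym.
  by rewrite -e; case: (ad z) hz => //= a l _; lia.
Qed.

End Finite.

Section Model.
Variables (V : Type) (R : V -> V -> Prop) (S : seq nat) (N n : nat) (r : V).
Hypothesis Rsym : forall x y, R x y -> R y x.
Hypothesis Rirr : forall x, ~ R x x.
Hypothesis hSN : forall j, j \in S -> j < N.
Hypothesis uS : uniq S.
Hypothesis hn : size (verts S N) = n.
Hypothesis hr : Psem R N.+1 S r r.
Hypothesis hsurj : forall z, z = r \/ exists w, R z w /\ exists2 i, i < N & Psem R N (bits i) z w.
Hypothesis hT : forall x y z, R y x -> R z x -> y <> z -> forall i, i < N ->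
          Psem R N (bits i) y x -> Psem R N (bits i) z x -> False.
Hypothesis hX : forall z w, R z w -> forall i j, i < N -> j < N ->
          Psem R N (bits i) z w -> Psem R N (bits j) w z -> False.

Definition step (x p : V) (j : nat) : V :=
  epsilon (inhabits x) (fun y => [/\ R y x, y <> p & Psem R N (bits j) y x]).

Fixpoint G (a : seq nat) : V * V :=
  match a with
  | [::] => (r, r)
  | j :: a' => (step (G a').1 (G a').2 j, (G a').1)
  end.

Definition g a := (G a).1.

Lemma Psem_down k ts x p : Psem R k ts x p -> forall y, R y x -> y <> p ->
  exists2 i, i \in ts & Psem R k.-1 (bits i) y x.
Proof.
case: k => [//|k] /= [h1 _] y hy hyp; case: (h1 y hy) => [//|[i hi h]]; by exists i.
Qed.

Lemma Psem_ex k ts x p : Psem R k ts x p -> forall i, i \in ts ->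
  exists y, [/\ R y x, y <> p & Psem R k.-1 (bits i) y x].
Proof. case: k => [//|k] /= [_ h2] i hi; exact: h2. Qed.

Lemma inv a : vr S a -> forall j a', a = j :: a' ->
  [/\ R (g a) (g a'), g a <> (G a').2 & Psem R N (bits j) (g a) (g a')].
Proof.
elim: a => [|j a IH] // hv j0 a' [ej ea]; subst j0 a'.
have hva : vr S a by move: hv => /= /andP [].
have ex : exists y, [/\ R y (G a).1, y <> (G a).2 & Psem R N (bits j) y (G a).1].
  case: a IH hv hva => [|i a''] IH hv hva.
  - have hjS : j \in S by move: hv => /=.
    have [y [h1 h2 h3]] := Psem_ex hr hjS.
    by exists y; split.
  - rewrite -[(G (i :: a'')).1]/(g (i :: a'')) -[(G (i :: a'')).2]/(g a'').
    have [h1 h2 h3] := IH hva i a'' erefl.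
    have hij : bitb i j by move: hv => /= /andP [].
    have hiN : i < N by apply: (vr_lt hSN hva); rewrite inE eqxx.
    have hjb : j \in bits i by rewrite mem_bits.
    have [y [y1 y2 y3]] := Psem_ex h3 hjb.
    exists y; split => //.
    apply: Psem_norm y3; move: hij => /bitb_lt; lia.
exact: (epsilon_spec (inhabits (G a).1) _ ex).
Qed.

Lemma vN a j : vr S a -> j \in a -> j < N.
Proof. move=> ha hj; exact: (vr_lt hSN ha hj). Qed.

Lemma nonroot j a : vr S (j :: a) -> g (j :: a) <> r.
Proof.
move=> hv e.
have [h1 h2 h3] := inv hv erefl.
rewrite e in h1 h3.
have hne : g a <> r by move=> e'; apply: (Rirr (x:=r)); rewrite -{2}e'.
have [i hi hi2] := Psem_down hr (Rsym h1) hne.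
apply: (hX h1 (i:=j) (j:=i)) h3 hi2; last exact: hSN.
by apply: (vN hv); rewrite inE eqxx.
Qed.

Lemma g_inj a : vr S a -> forall b, vr S b -> g a = g b -> a = b.
Proof.
elim: a => [|i a IH] ha [|j b] hb e //.
- by case: (nonroot hb); rewrite -e.
- by case: (nonroot ha).
- have [a1 a2 a3] := inv ha erefl.
  have [b1 b2 b3] := inv hb erefl.
  have hva : vr S a by move: ha => /= /andP [].
  have hvb : vr S b by move: hb => /= /andP [].
  have hiN : i < N by apply: (vN ha); rewrite inE eqxx.
  have hjN : j < N by apply: (vN hb); rewrite inE eqxx.
  case: (classic (g a = g b)) => [eab|neab].
  + rewrite -e -eab in b3.
    have eij := Psem_uniq a3 b3.
    by rewrite eij (IH hva b hvb eab).
  + rewrite -e in b1 b3.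
    have [i2 hi2 hi2'] := Psem_down a3 (Rsym b1) (fun h => neab (esym h)).
    have hi2N : i2 < N by move: hi2; rewrite mem_bits => /bitb_lt; lia.
    have hi2'' := Psem_norm hi2N hi2'.
    by case: (hX b1 hjN hi2N b3 hi2'').
Qed.

Lemma g_edge a b : vr S a -> vr S b -> R (g a) (g b) -> adjA a b.
Proof.
move=> ha hb hR.
case: a ha hR => [|j a'] ha hR.
-
  have hne : g b <> r by move=> e; apply: (Rirr (x:=r)); rewrite -{2}e.
  have [i hi hi2] := Psem_down hr (Rsym hR) hne.
  have hvi : vr S [:: i] by rewrite /= hi.
  have [c1 c2 c3] := inv hvi erefl.
  case: (classic (g b = g [:: i])) => [e|ne].
    by rewrite (g_inj hb hvi e) /adjA /= ?eqxx ?orbT.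
  by case: (hT (Rsym hR) c1 ne (hSN hi) hi2 c3).
- have [a1 a2 a3] := inv ha erefl.
  have hva : vr S a' by move: ha => /= /andP [].
  case: (classic (g b = g a')) => [e|ne].
    by rewrite (g_inj hb hva e) /adjA /= ?eqxx ?orbT.
  have [i hi hi2] := Psem_down a3 (Rsym hR) ne.
  have hjN : j < N by apply: (vN ha); rewrite inE eqxx.
  have hiN : i < N by move: hi; rewrite mem_bits => /bitb_lt; lia.
  have hvi : vr S [:: i, j & a'] by rewrite /= -/(vr S (j :: a')) ha -mem_bits hi.
  have [c1 c2 c3] := inv hvi erefl.
  case: (classic (g b = g [:: i, j & a'])) => [e|ne'].
    by rewrite (g_inj hb hvi e) /adjA /= ?eqxx ?orbT.
  by case: (hT (Rsym hR) c1 ne' hiN (Psem_norm hiN hi2) c3).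
Qed.

Lemma g_chain m : forall z w i, N - i <= m -> i < N -> R z w -> Psem R N (bits i) z w ->
  exists a, [/\ vr S (i :: a), g (i :: a) = z & g a = w].
Proof.
elim: m => [|m IH] z w i hm hi hzw hP; first by lia.
case: (classic (w = r)) => [ewr|nwr].
- subst w.
  have hzr : z <> r by move=> e; apply: (Rirr (x:=r)); rewrite -{1}e.
  have [i' hi' hP'] := Psem_down hr hzw hzr.
  have eii := Psem_uniq hP hP'; subst i'.
  have hvi : vr S [:: i] by rewrite /= hi'.
  have [c1 c2 c3] := inv hvi erefl.
  case: (classic (z = g [:: i])) => [e|ne].
    by exists [::]; split.
  by case: (hT hzw c1 ne hi hP c3).
- case: (hsurj w) => [//|[w' [hww' [i' hi' hP']]]].
  case: (classic (w' = z)) => [ewz|nwz].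
    subst w'; by case: (hX hzw hi hi' hP hP').
  have [i2 hi2 hP2] := Psem_down hP' hzw (fun e => nwz (esym e)).
  have hi2N : i2 < N by move: hi2; rewrite mem_bits => /bitb_lt; lia.
  have ei2 := Psem_uniq hP (Psem_norm hi2N hP2); subst i2.
  have hii' : i < i' by move: hi2; rewrite mem_bits => /bitb_lt.
  have [a [av ag ag']] := IH w w' i' ltac:(lia) hi' hww' hP'.
  have hvi : vr S [:: i, i' & a] by rewrite /= -/(vr S (i' :: a)) av -mem_bits hi2.
  have [c1 c2 c3] := inv hvi erefl.
  rewrite ag in c1 c3.
  case: (classic (z = g [:: i, i' & a])) => [e|ne].
    by exists (i' :: a); split; rewrite ?ag.
  by case: (hT hzw c1 ne hi hP c3).
Qed.

Lemma g_surj z : exists a, vr S a /\ g a = z.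
Proof.
case: (hsurj z) => [->|[w [hzw [i hi hP]]]]; first by exists [::].
have [a [av ag _]] := g_chain (leqnn _) hi hzw hP.
by exists (i :: a).
Qed.

Lemma model_iso : iso (@eG S N n) R.
Proof.
exists (fun u => g (addr S N u)); split; last split.
- move=> u v e; apply: (addr_inj uS hn); apply: g_inj => //; exact: addr_vr.
- move=> y; have [a [av ag]] := g_surj y.
  have [u hu] := addr_surj hSN hn av.
  by exists u; rewrite hu.
- move=> u v; split.
  + rewrite /eG /adjA => /orP [/andP [hv /eqP e]|/andP [hu /eqP e]].
    * case ev: (addr S N v) hv e => [|j b] // _ /= e; subst b.
      have hv := addr_vr hSN hn v; rewrite ev in hv.
      have [h1 _ _] := inv hv erefl.
      exact: Rsym.
    * case eu: (addr S N u) hu e => [|j b] // _ /= e; subst b.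
      have hu := addr_vr hSN hn u; rewrite eu in hu.
      have [h1 _ _] := inv hu erefl.
      exact: h1.
  + move=> h; apply: g_edge => //; exact: addr_vr.
Qed.

End Model.

Fixpoint exs (k : nat) (f : form) : form := if k is k'.+1 then FEx (exs k' f) else f.

Lemma qr_exs k f : qr (exs k f) = k + qr f.
Proof. by elim: k => //= k ->. Qed.

Lemma bounded_exs k f d : bounded d (exs k f) = bounded (k + d) f.
Proof. by elim: k d => //= k IH d; rewrite IH addSnnS. Qed.

Lemma sat_exs V (R : V -> V -> Prop) k f : forall env,
  sat R env (exs k f) <-> exists l, size l = k /\ sat R (l ++ env) f.
Proof.
elim: k => [|k IH] env /=; first by split; [exists [::] | move=> [[|x l] [//]]].
split.
- move=> [x /IH [l [hl h]]]; exists (rcons l x); by rewrite size_rcons hl cat_rcons.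
- move=> [l [hl h]]; case/lastP: l hl h => [|l x] // hl h.
  exists x; apply/IH; exists l; move: hl; rewrite size_rcons => -[hl].
  by rewrite -cat_rcons.
Qed.

Lemma onth_nth T (s : seq T) x0 i : i < size s -> onth s i = Some (nth x0 s i).
Proof. by elim: s i => [|x s IH] [|i] //= hi; apply: IH. Qed.

Section BF.
Variables (m : nat) (e : rel 'I_m.+1).
Local Notation n := m.+1.

Definition ebn (i j : nat) : bool := e (inord i) (inord j).

Definition BFdist : form :=
  bigAnd [seq bigAnd [seq (if i == j then FTrue else FNot (FEq i j)) | j <- iota 0 n] | i <- iota 0 n].
Definition BFadj : form :=
  bigAnd [seq bigAnd [seq (if ebn i j then FAdj i j else FNot (FAdj i j)) | j <- iota 0 n] | i <- iota 0 n].
Definition BFcov : form := FAll (bigOr [seq FEq 0 i.+1 | i <- iota 0 n]).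
Definition BF : form := exs n (FAnd BFdist (FAnd BFadj BFcov)).

Lemma qr_BF : qr BF = n.+1.
Proof.
rewrite /BF qr_exs.
have -> : qr (FAnd BFdist (FAnd BFadj BFcov)) = maxn (qr BFdist) (maxn (qr BFadj) (qr BFcov)) by [].
have -> : qr BFcov = (qr (bigOr [seq FEq 0 i.+1 | i <- iota 0 n])).+1 by [].
have h1 : qr BFdist <= 0.
  apply: qr_bigAnd => i _; apply: qr_bigAnd => j _; by case: (i == j).
have h2 : qr BFadj <= 0.
  apply: qr_bigAnd => i _; apply: qr_bigAnd => j _; by case: (ebn i j).
have h3 : qr (bigOr [seq FEq 0 i.+1 | i <- iota 0 n]) <= 0 by apply: qr_bigOr.
move: h1 h2 h3; rewrite !leqn0 => /eqP -> /eqP -> /eqP ->; lia.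
Qed.

Lemma sentence_BF : sentence BF.
Proof.
rewrite /sentence /BF bounded_exs addn0.
have -> : bounded n (FAnd BFdist (FAnd BFadj BFcov)) = [&& bounded n BFdist, bounded n BFadj & bounded n.+1 (bigOr [seq FEq 0 i.+1 | i <- iota 0 n])] by [].
apply/and3P; split.
- apply: bounded_bigAnd => i; rewrite mem_iota => /andP [_ hi].
  apply: bounded_bigAnd => j; rewrite mem_iota => /andP [_ hj].
  by case: (i == j) => //=; rewrite hi hj.
- apply: bounded_bigAnd => i; rewrite mem_iota => /andP [_ hi].
  apply: bounded_bigAnd => j; rewrite mem_iota => /andP [_ hj].
  by case: (ebn i j) => //=; rewrite hi hj.
- apply: bounded_bigOr => i; rewrite mem_iota => /andP [_ hi] /=; lia.
Qed.

Lemma defines_BF : symmetric e -> irreflexive e -> defines e BF.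
Proof.
move=> esym eirr.
split; first exact: sentence_BF.
split.
- apply/sat_exs; exists (enum 'I_n); rewrite size_enum_ord cats0; split => //.
  have hnth : forall i, i < n -> onth (enum 'I_n) i = Some (inord i).
    move=> i hi; rewrite (onth_nth ord0) ?size_enum_ord //; congr Some.
    by apply: val_inj; rewrite /= nth_enum_ord // inordK.
  split; [|split].
  + apply/sat_bigAnd => i; rewrite mem_iota => /andP [_ hi].
    apply/sat_bigAnd => j; rewrite mem_iota => /andP [_ hj].
    case: eqP => [//|ne] /=; rewrite !hnth //.
    by move=> h; apply: ne; move/(congr1 val): h; rewrite /= !inordK.
  + apply/sat_bigAnd => i; rewrite mem_iota => /andP [_ hi].
    apply/sat_bigAnd => j; rewrite mem_iota => /andP [_ hj].
    rewrite /ebn; case h: (e _ _) => /=; rewrite !hnth // ?h //.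
  + move=> y; apply/(sat_bigOr _ _ (fun i => FEq 0 i.+1)); exists (val y); first by rewrite mem_iota /=.
    by rewrite /= hnth // inord_val.
- move=> V R _ /sat_exs [l [hl hs]].
  have hd : sat R l (bigAnd [seq bigAnd [seq (if i == j then FTrue else FNot (FEq i j)) | j <- iota 0 n] | i <- iota 0 n]).
    by move: hs; rewrite cats0 => -[].
  have ha : sat R l (bigAnd [seq bigAnd [seq (if ebn i j then FAdj i j else FNot (FAdj i j)) | j <- iota 0 n] | i <- iota 0 n]).
    by move: hs; rewrite cats0 => -[_ []].
  have hc : forall y, sat R (y :: l) (bigOr [seq FEq 0 i.+1 | i <- iota 0 n]).
    by move: hs; rewrite cats0 => -[_ [_]].
  clear hs.
  case: l hl hd ha hc => [//|v0 l'] hl hd ha hc.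
  set l := v0 :: l' in hl hd ha hc.
  have hnth : forall i, i < n -> onth l i = Some (nth v0 l i).
    by move=> i hi; apply: onth_nth; rewrite hl.
  exists (fun u : 'I_n => nth v0 l u); split; [|split].
  + move=> u v huv; apply/eqP; case: eqP => // ne; exfalso.
    have hu : (u : nat) \in iota 0 n by rewrite mem_iota /=.
    have hv : (v : nat) \in iota 0 n by rewrite mem_iota /=.
    move/sat_bigAnd: hd => /(_ u hu) /sat_bigAnd /(_ v hv).
    have -> : (nat_of_ord u == v) = false by apply/eqP => h; apply: ne; apply: val_inj.
    by rewrite /= !hnth.
  + move=> y; move: (hc y) => /sat_bigOr [i]; rewrite mem_iota /= => hi.
    rewrite /= hnth // => ->; exists (inord i); by rewrite inordK.
  + move=> u v.
    have hu : (u : nat) \in iota 0 n by rewrite mem_iota /=.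
    have hv : (v : nat) \in iota 0 n by rewrite mem_iota /=.
    move/sat_bigAnd: ha => /(_ u hu) /sat_bigAnd /(_ v hv).
    rewrite /ebn !inord_val; case: (e u v) => /=; rewrite !hnth // => h; split => // h'.
Qed.

End BF.

Lemma general_case S N n :
  (forall j, j \in S -> j < N) -> uniq S -> size (verts S N) = n ->
  (forall j, j \in S -> N <= \sum_(a <- S | a != j) 2 ^ a) ->
  N <= tower (logstar n) ->
  exists e : rel 'I_n, is_tree e /\ D_lt e (logstar n + 5).
Proof.
move=> hSN uS hn hC hNL.
exists (@eG S N n); split; first exact: tree_eG.
exists (Phi S N); split; last first.
  have := qr_Phi (L:=logstar n) hNL hSN; lia.
split; first exact: sentence_Phi.
split; first by apply/sat_Phi; exact: Fsem.
move=> V R [Rsym Rirr] /sat_Phi [[r [hr hsurj]] hT hX].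
exact: (model_iso Rsym Rirr hSN uS hn hr hsurj hT hX).
Qed.

Lemma logstar_spec n : n <= tower (logstar n).
Proof. rewrite /logstar; case: ex_minnP => m hm _; exact: hm. Qed.

Lemma tower_mono i j : i <= j -> tower i <= tower j.
Proof.
elim: j => [|j IH]; first by rewrite leqn0 => /eqP ->.
rewrite leq_eqVlt => /orP [/eqP -> //|]; rewrite ltnS => /IH h.
apply: leq_trans h _ => /=; exact: ltnW (ltn_expl _ (ltnSn 1)).
Qed.

Lemma logstar_gt k n : tower k < n -> k < logstar n.
Proof.
move=> h; rewrite ltnNge; apply/negP => hl.
have := leq_trans (logstar_spec n) (tower_mono hl); lia.
Qed.

Lemma iotaS0 m : iota 0 m.+1 = rcons (iota 0 m) m.
Proof. by rewrite -addn1 iotaD cats1. Qed.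

Lemma sizeT_eq i : sizeT i = (\sum_(j <- bits i) sizeT j).+1.
Proof.
rewrite /sizeT /= sumnE big_map; congr (_.+1).
apply: eq_big_seq => j; rewrite mem_bits => /bitb_lt hj.
rewrite /sizeT; exact: (sz_fuel hj (ltnSn j)).
Qed.

Lemma sizeT_pos i : 0 < sizeT i.
Proof. by rewrite sizeT_eq. Qed.

Lemma sum_subset (A : seq nat) m (G : nat -> nat) : uniq A -> {subset A <= iota 0 m} ->
  \sum_(j <- A) G j <= \sum_(j <- iota 0 m) G j.
Proof.
move=> uA hA.
have pA : perm_eq A [seq i <- iota 0 m | i \in A].
  apply: uniq_perm => //; first by rewrite filter_uniq // iota_uniq.
  move=> x; rewrite mem_filter; case hx: (x \in A) => //=; by rewrite hA.
rewrite (perm_big _ pA) /= big_filter big_mkcond /=.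
apply: leq_sum => i _; by case: (i \in A).
Qed.

Lemma sizeT_le_gen j : sizeT j <= (\sum_(i <- iota 0 j) sizeT i).+1.
Proof.
rewrite sizeT_eq ltnS; apply: sum_subset; first exact: uniq_bits.
move=> x; rewrite mem_bits mem_iota /= => /bitb_lt; lia.
Qed.

Lemma pow_big K : 3 <= K -> K < 2 ^ K.-1.
Proof.
move=> hK; have [d ->] : exists d, K = d + 3 by exists (K - 3); lia.
elim: d => [|d IH] //.
have -> : (d.+1 + 3).-1 = (d + 3).-1.+1 by lia.
rewrite expnS; lia.
Qed.

Lemma sizeT_le K : 3 <= K -> sizeT K <= (\sum_(i <- iota 0 K.-1) sizeT i).+1.
Proof.
move=> hK; rewrite sizeT_eq ltnS; apply: sum_subset; first exact: uniq_bits.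
move=> x; rewrite mem_bits mem_iota /= => /bitb_le hx.
have := pow_big hK.
have : x < K.-1 \/ K.-1 <= x by lia.
case=> // h1 h2; have := leq_trans (leq_pexp2l (isT : 0 < 2) h1) hx; lia.
Qed.

Lemma subset_sum m : forall t, t <= \sum_(i <- iota 0 m) sizeT i ->
  exists A, subseq A (iota 0 m) /\ \sum_(a <- A) sizeT a = t.
Proof.
elim: m => [|m IH] t ht.
  by exists [::]; move: ht; rewrite big_nil leqn0 => /eqP ->.
move: ht; rewrite iotaS0 -cats1 big_cat big_seq1 /= => ht.
case: (leqP t (\sum_(i <- iota 0 m) sizeT i)) => h.
  have [A [hA hs]] := IH t h; exists A; split => //.
  apply: subseq_trans hA _; exact: prefix_subseq.
have hm := sizeT_le_gen m.
have [A [hA hs]] := IH (t - sizeT m) ltac:(lia).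
exists (A ++ [:: m]); split.
  by apply: cat_subseq => //; rewrite sub1seq mem_seq1.
have ht2 : sizeT m <= t by lia.
rewrite big_cat big_seq1 hs; exact: subnK ht2.
Qed.

Definition PT K := \sum_(i <- iota 0 K.+1) sizeT i.

Lemma PT_S K : PT K.+1 = PT K + sizeT K.+1.
Proof. by rewrite /PT iotaS0 -cats1 big_cat big_seq1. Qed.

Lemma PT_ge K : K < PT K.
Proof.
elim: K => [|K IH]; first by rewrite /PT big_seq1 sizeT_pos.
rewrite PT_S; have := sizeT_pos K.+1; lia.
Qed.

Lemma s0 : sizeT 0 = 1. Proof. by []. Qed.
Lemma s1 : sizeT 1 = 2. Proof. by []. Qed.
Lemma s2 : sizeT 2 = 3. Proof. by []. Qed.
Lemma s3 : sizeT 3 = 4. Proof. by []. Qed.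

Lemma sizeT_le' K : 3 <= K -> sizeT K.+1 + sizeT K <= (PT K).+1.
Proof.
move=> hK; have hK1 : 3 <= K.+1 by lia.
have := sizeT_le hK1; rewrite /= => h.
have e : PT K = \sum_(i <- iota 0 K) sizeT i + sizeT K.
  by rewrite /PT iotaS0 -cats1 big_cat big_seq1.
rewrite e; lia.
Qed.

Lemma find_K d : forall t, 7 <= t -> t <= PT (d + 3) ->
  exists K, [/\ 3 <= K, sizeT K + sizeT K.-1 <= t, t <= PT K & K < t].
Proof.
elim: d => [|d IH] t h7 ht.
  exists 3; split => //; rewrite ?s3 ?s2 //; lia.
case: (leqP t (PT (d + 3))) => h; first exact: IH.
exists (d.+1 + 3); split.
- lia.
- have hd : 3 <= d + 3 by lia.
  rewrite addSn /=; have := sizeT_le' hd; lia.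
- exact: ht.
- have := PT_ge (d + 3); lia.
Qed.

Lemma sum_ge_term (S : seq nat) (P : pred nat) (G : nat -> nat) x :
  x \in S -> P x -> G x <= \sum_(a <- S | P a) G a.
Proof.
elim: S => [|y S IH] //; rewrite inE big_cons => /orP [/eqP <- ->|hx hP]; first exact: leq_addr.
case: (P y); last exact: IH.
apply: leq_trans (IH hx hP) _; exact: leq_addl.
Qed.

Lemma sumn_big (S : seq nat) : sumn [seq sizeT j | j <- S] = \sum_(j <- S) sizeT j.
Proof. by rewrite sumnE big_map. Qed.

Lemma small_case m S N : (forall j, j \in S -> j < N) -> uniq S -> size (verts S N) = m.+1 ->
  m.+2 < logstar m.+1 + 5 ->
  exists e : rel 'I_m.+1, is_tree e /\ D_lt e (logstar m.+1 + 5).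
Proof.
move=> hSN uS hn hq.
have ht := tree_eG hSN uS hn.
exists (@eG S N m.+1); split => //.
exists (BF (@eG S N m.+1)); split; last by rewrite qr_BF.
case: ht => hs [hi _].
by apply: defines_BF.
Qed.

Lemma big_case n : 8 <= n -> exists e : rel 'I_n, is_tree e /\ D_lt e (logstar n + 5).
Proof.
move=> hn8.
set t := n.-1.
have ht7 : 7 <= t by rewrite /t; lia.
have htP : t <= PT (t + 3) by have := PT_ge (t + 3); lia.
have [K [hK3 hKs htK hKt]] := find_K ht7 htP.
have ePT : PT K = \sum_(i <- iota 0 K.-1) sizeT i + sizeT K.-1 + sizeT K.
  have -> : K = K.-1.+1 by lia.
  by rewrite /PT !iotaS0 -!cats1 !big_cat !big_seq1 /=.
set rem := t - (sizeT K + sizeT K.-1).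
have hrem : rem <= \sum_(i <- iota 0 K.-1) sizeT i by rewrite /rem; lia.
have [A [hA hsA]] := subset_sum hrem.
have hAlt : forall a, a \in A -> a < K.-1.
  by move=> a /(mem_subseq hA); rewrite mem_iota.
set S := [:: K, K.-1 & A].
have hSN : forall j, j \in S -> j < K.+1.
  move=> j; rewrite !inE => /orP [/eqP ->|/orP [/eqP ->|/hAlt]]; lia.
have uS : uniq S.
  rewrite /S /= (subseq_uniq hA (iota_uniq 0 _)) andbT !inE negb_or.
  apply/andP; split; first (apply/andP; split).
  - apply/eqP; lia.
  - apply/negP => /hAlt; lia.
  - apply/negP => /hAlt; lia.
apply: (@general_case S K.+1).
- exact: hSN.
- exact: uS.
- rewrite (size_verts hSN) sumn_big /S !big_cons hsA /rem; lia.
- move=> j; rewrite !inE => /orP [/eqP ej|hj].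
  + subst j.
    have h1 : K.-1 \in S by rewrite !inE eqxx orbT.
    have h2 : K.-1 != K by apply/eqP; lia.
    apply: leq_trans (sum_ge_term (fun a => 2 ^ a) h1 h2).
    have := pow_big hK3; lia.
  + have h1 : K \in S by rewrite !inE eqxx.
    have h2 : K != j.
      apply/eqP => ekj; move: hj; rewrite -ekj => /orP [/eqP|/hAlt]; lia.
    apply: leq_trans (sum_ge_term (fun a => 2 ^ a) h1 h2).
    exact: ltn_expl.
- have := logstar_spec n; rewrite /t in hKt; lia.
Qed.

Theorem theorem6p1 (n : nat) : 1 <= n ->
  exists e : rel 'I_n, is_tree e /\ D_lt e (logstar n + 5).
Proof.
move=> hn.
case: (leqP 8 n) => h8; first exact: big_case.
have hl4 : 0 < logstar 4 by apply: logstar_gt.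
have hl5 : 1 < logstar 5 by apply: logstar_gt.
have hl6 : 2 < logstar 6 by apply: logstar_gt.
case: n hn h8 => [//|[|[|[|[|[|[|[|n]]]]]]]] _ h8 //.
- apply: (@small_case 0 [::] 0) => //; lia.
- apply: (@small_case 1 [:: 0] 1) => //; first (by move=> j; rewrite inE => /eqP ->); lia.
- apply: (@small_case 2 [:: 1] 2) => //; first (by move=> j; rewrite inE => /eqP ->); lia.
- apply: (@small_case 3 [:: 0; 1] 2) => //; first (by move=> j; rewrite !inE => /orP [] /eqP ->); lia.
- apply: (@small_case 4 [:: 0; 2] 3) => //; first (by move=> j; rewrite !inE => /orP [] /eqP ->); lia.
- apply: (@small_case 5 [:: 1; 2] 3) => //; first (by move=> j; rewrite !inE => /orP [] /eqP ->); lia.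
- apply: (@general_case [:: 0; 1; 2] 3) => //.
  + by move=> j; rewrite !inE => /or3P [] /eqP ->.
  + by move=> j; rewrite !inE => /or3P [] /eqP ->; rewrite !big_cons big_nil.
  + have := logstar_spec 7; have := @logstar_gt 2 7 isT; lia.
Qed.
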